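(* Let $\star$ be a semistar operation on an integral domain $D$. Then $D^{[\star]}$ is $t$-linked to $(D,\star)$. If moreover $(D:_K D^\star)\ne(0)$, then the complete integral closure $\widetilde D$ of $D$ is $t$-linked to $(D,\star)$. In particular, the complete integral closure $\widetilde D$ of $D$ is always $t$-linked to $D$.
   Context: Let $D$ be an integral domain with quotient field $K$. $\overline{\mathbf F}(D)$ denotes the set of all nonzero $D$-submodules of $K$ and $\mathbf f(D)$ the set of nonzero finitely generated $D$-submodules of $K$. A semistar operation on $D$ is a map $\star:\overline{\mathbf F}(D)\to\overline{\mathbf F}(D)$, $E\mapsto E^\star$, such that for all $0\ne x\in K$ and $E,F\in\overline{\mathbf F}(D)$: (1) $(xE)^\star=xE^\star$; (2) $E\subseteq F\Rightarrow E^\star\subseteq F^\star$; (3) $E\subseteq E^\star$ and $(E^\star)^\star=E^\star$. $\star_f$ is defined by $E^{\star_f}=\bigcup\{F^\star:F\in\mathbf f(D),F\subseteq E\}$. $D^{[\star]}:=\bigcup\{(H^\star:_KH^\star): H\in\mathbf f(D)\}$ (an overring of $D$). The complete integral closure of $D$ is $\widetilde D=\bigcup\{(E:_KE): E$ a nonzero fractional ideal of $D\}$. For an overring $T$ of $D$ (a ring with $D\subseteq T\subseteq K$), $v_T$ is the semistar operation $E\mapsto (T:_K(T:_KE))$ on $T$ and $t_T:=(v_T)_f$. If $\star'$ is a semistar operation on $T$, $T$ is $(\star,\star')$-linked to $D$ if for every nonzero finitely generated ideal $F\subseteq D$ with $F^\star=D^\star$ one has $(FT)^{\star'}=T^{\star'}$.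 $T$ is $t$-linked to $(D,\star)$ if it is $(\star,t_T)$-linked to $D$, and $t$-linked to $D$ if it is $(t_D,t_T)$-linked to $D$. *)

(* Defs.v *)
From HB Require Import structures.
From mathcomp Require Import all_boot all_order all_algebra.
From mathcomp Require Import boolp classical_sets.

Set Implicit Arguments.
Unset Strict Implicit.
Unset Printing Implicit Defensive.
Import GRing.Theory.
Local Open Scope ring_scope.
Local Open Scope classical_set_scope.

(* Sets are subsets of a field K (the quotient field of D).  The integral
   domain D is realized as a subring D of K whose quotient field is K. *)
Section SemistarDefs.
Variable K : fieldType.
Implicit Types (D T A B E F : set K).

Definition is_subring D :=
  [/\ D 1, (forall x y, D x -> D y -> D (x - y)) &
      (forall x y, D x -> D y -> D (x * y))].

Definition domain_with_qf D :=
  is_subring D /\ forall x : K, exists a b, [/\ D a, D b, b != 0 & x = a / b].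

Definition is_Dmodule D E :=
  [/\ E 0, (forall x y, E x -> E y -> E (x + y)) &
      (forall d x, D d -> E x -> E (d * x))].

Definition nonzero_set E := exists x, E x /\ x != 0.

Definition Fbar D E := is_Dmodule D E /\ nonzero_set E.

Fixpoint span D (s : seq K) : set K :=
  match s with
  | [::] => [set 0]
  | a :: s' => fun x => exists d y, [/\ D d, span D s' y & x = d * a + y]
  end.

Definition fD D E := Fbar D E /\ exists s, E = span D s.

Definition scale (x : K) E : set K := fun y => exists e, E e /\ y = x * e.

Definition semistar D (star : set K -> set K) :=
  [/\ (forall E, Fbar D E -> Fbar D (star E)),
      (forall x E, x != 0 -> Fbar D E -> star (scale x E) = scale x (star E)),
      (forall E F, Fbar D E -> Fbar D F -> E `<=` F -> star E `<=` star F) &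
      (forall E, Fbar D E -> E `<=` star E /\ star (star E) = star E)].

Definition finite_type D (star : set K -> set K) E : set K :=
  fun x => exists F, [/\ fD D F, F `<=` E & star F x].

Definition colon E F : set K := fun x => forall f, F f -> E (x * f).

Definition Dbracket D (star : set K -> set K) : set K :=
  fun x => exists H, fD D H /\ colon (star H) (star H) x.

Definition frac_ideal D E :=
  is_Dmodule D E /\ exists d, [/\ D d, d != 0 & scale d E `<=` D].

Definition cic D : set K :=
  fun x => exists E, [/\ frac_ideal D E, nonzero_set E & colon E E x].

Definition vop T E : set K := colon T (colon T E).
Definition top T E : set K := finite_type T (vop T) E.

Definition prodset A B : set K :=
  fun x => exists s : seq (K * K),
    (forall p, p \in s -> A p.1 /\ B p.2) /\ x = \sum_(p <- s) p.1 * p.2.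

Definition linked D (star : set K -> set K) T (star' : set K -> set K) :=
  forall F, fD D F -> F `<=` D -> star F = star D ->
    star' (prodset F T) = star' T.

Definition t_linked_star D star T := linked D star T (top T).

Definition t_linked D T := linked D (top D) T (top T).

End SemistarDefs.

(* Main.v *)
Require Import Defs.
From HB Require Import structures.
From mathcomp Require Import all_boot all_order all_algebra.
From mathcomp Require Import boolp classical_sets.
From mathcomp Require Import ring.
Set Implicit Arguments. Unset Strict Implicit. Unset Printing Implicit Defensive.
Import GRing.Theory.
Local Open Scope ring_scope.
Local Open Scope classical_set_scope.

Notation dspan := Defs.span.

Section Aux.
Variable K : fieldType.
Implicit Types (D T A B E F M N R P : set K).

Definition ringlike R :=
  [/\ R 0, R 1, (forall x y, R x -> R y -> R (x + y)) & (forall x y, R x -> R y -> R (x * y))].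

Lemma subring_ringlike D : is_subring D -> ringlike D.
Proof.
case=> D1 Dsub Dmul.
have D0 : D 0 by rewrite -(subrr 1); apply: Dsub.
have Dopp : forall x, D x -> D (- x) by move=> x Dx; rewrite -sub0r; apply: Dsub.
split=> // x y Dx Dy; rewrite -(opprK y); apply: Dsub=> //; exact: Dopp.
Qed.

Lemma span0 R s : R 0 -> dspan R s 0.
Proof. move=> R0; elim: s => [|a s IH] //=; exists 0, 0; split=> //; by rewrite mul0r addr0. Qed.

Lemma span_sub R P s : ringlike R -> is_Dmodule R P -> (forall a, a \in s -> P a) ->
  dspan R s `<=` P.
Proof.
move=> _ [P0 Padd Pmul]; elim: s => [|b s IH] Hs x /=; first by move->.
case=> d [y [Rd Sy ->]]; apply: Padd; first by apply: Pmul => //; apply: Hs; rewrite inE eqxx.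
by apply: IH => // a ai; apply: Hs; rewrite inE ai orbT.
Qed.

Lemma span_mod R s : ringlike R -> is_Dmodule R (dspan R s).
Proof.
case=> R0 R1 Radd Rmul; split; first exact: span0.
  elim: s => [|a s IH] x y /=; first by move=> -> ->; rewrite addr0.
  move=> [d [x' [Rd Sx ->]]] [e [y' [Re Sy ->]]].
  exists (d + e), (x' + y'); split; [exact: Radd|exact: IH|].
  by rewrite mulrDl -!addrA; congr (_ + _); rewrite addrCA.
elim: s => [|a s IH] d x /=; first by move=> _ ->; rewrite mulr0.
move=> Rd [e [y [Re Sy ->]]]; exists (d * e), (d * y); split; [exact: Rmul|exact: IH|].
by rewrite mulrDr mulrA.
Qed.

Lemma span_mem R s a : ringlike R -> a \in s -> dspan R s a.
Proof.
move=> [R0 R1 Radd Rmul]; elim: s => [|b s IH] //=; rewrite inE; case/orP=> [/eqP ->|ai].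
  by exists 1, 0; split=> //; [exact: span0|rewrite mul1r addr0].
by exists 0, a; split=> //; [exact: IH|rewrite mul0r add0r].
Qed.

Lemma span_nonzero R s : ringlike R -> nonzero_set (dspan R s) ->
  exists a, a \in s /\ a != 0.
Proof.
move=> HR [x [Sx x0]]; apply: contrapT => H.
have : [set 0] x.
  apply: (span_sub HR _ _ Sx).
    split=> //; first by move=> u v -> ->; rewrite addr0.
    by move=> d u _ ->; rewrite mulr0.
  move=> a ai; apply/eqP; apply: contrapT => a0; apply: H; exists a; split => //; exact/negP.
by move=> x00; rewrite x00 eqxx in x0.
Qed.

Lemma prodset0 A B : prodset A B 0.
Proof. by exists [::]; split=> //; rewrite big_nil. Qed.

Lemma prodset_add A B x y : prodset A B x -> prodset A B y -> prodset A B (x + y).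
Proof.
case=> l1 [H1 ->] [l2 [H2 ->]]; exists (l1 ++ l2); split; last by rewrite big_cat.
by move=> p; rewrite mem_cat; case/orP; [apply: H1|apply: H2].
Qed.

Lemma prodset_map A B A' B' c (h : K * K -> K * K) y :
  (forall p, A p.1 -> B p.2 -> A' (h p).1 /\ B' (h p).2) ->
  (forall p, (h p).1 * (h p).2 = c * (p.1 * p.2)) ->
  prodset A B y -> prodset A' B' (c * y).
Proof.
move=> HAB Hh [l [Hl ->]]; exists (map h l); split.
  by move=> p /mapP [q ql ->]; case: (Hl q ql) => *; exact: HAB.
by rewrite big_map mulr_sumr; apply: eq_bigr => p _; rewrite Hh.
Qed.

Lemma prodset_in R A B : ringlike R -> A `<=` R -> B `<=` R -> prodset A B `<=` R.
Proof.
move=> [R0 R1 Radd Rmul] AR BR x [l [Hl ->]]; elim: l Hl => [|p l IH] Hl.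
  by rewrite big_nil.
rewrite big_cons; apply: Radd; last by apply: IH => q ql; apply: Hl; rewrite inE ql orbT.
by case: (Hl p (mem_head _ _)) => *; apply: Rmul; [apply: AR|apply: BR].
Qed.

Lemma prodset_mem A B a b : A a -> B b -> prodset A B (a * b).
Proof.
by move=> Aa Bb; exists [:: (a, b)]; split; [move=> p; rewrite inE => /eqP ->|rewrite big_seq1].
Qed.

Lemma generic_link D T s : is_subring D -> ringlike T -> D `<=` T ->
  dspan D s `<=` D -> nonzero_set (dspan D s) ->
  (forall z, (forall a, a \in s -> T (z * a)) -> T z) ->
  top T (prodset (dspan D s) T) = top T T.
Proof.
move=> HD HT DT FD Fnz KEY; have HDr := subring_ringlike HD.
have [T0 T1 Tadd Tmul] := HT.
have PT : prodset (dspan D s) T `<=` T.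
  by apply: prodset_in => // x Fx; apply: DT; apply: FD.
apply/seteqP; split => x.
  by case=> G [fG GP vx]; exists G; split => // y /GP; apply: PT.
case=> G [fG GT vx].
have xT : T x by rewrite -(mulr1 x); apply: vx => g Gg; rewrite mul1r; apply: GT.
have [a [ai a0]] := span_nonzero HDr Fnz.
exists (dspan T s); split.
- split; last by exists s.
  split; first exact: span_mod.
  by exists a; split => //; apply: span_mem.
- apply: span_sub => //.
    split; first exact: prodset0.
      exact: prodset_add.
    move=> d y Td Py.
    apply: (prodset_map (c := d) (h := fun p => (p.1, d * p.2))) Py.
      by move=> p /= Ap Bp; split=> //; apply: Tmul.
    by move=> p /=; rewrite mulrCA.
  move=> b bi; rewrite -[b]mulr1; apply: prodset_mem => //.
  exact: span_mem.
- move=> y cy; apply: Tmul => //; apply: KEY => b bi; apply: cy.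
  exact: span_mem.
Qed.

End Aux.


Section Star.
Variable K : fieldType.
Variables (D : set K) (star : set K -> set K).
Hypotheses (HD : is_subring D) (Hs : semistar D star).
Implicit Types (E F M N : set K).

Let HDr := subring_ringlike HD.

Lemma FbarD : Fbar D D.
Proof.
have [D0 D1 Dadd Dmul] := HDr; split; first by split.
by exists 1; split=> //; exact: oner_neq0.
Qed.

Lemma fDD : fD D D.
Proof.
split; first exact: FbarD.
exists [:: 1]; apply/seteqP; split=> x /=.
  by move=> Dx; exists x, 0; split => //; rewrite mulr1 addr0.
by case=> d [y [Dd -> ->]]; rewrite mulr1 addr0.
Qed.

Lemma Fbar_star M : Fbar D M -> Fbar D (star M).
Proof. by case: Hs => H _ _ _; apply: H. Qed.

Lemma sub_star M : Fbar D M -> M `<=` star M.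
Proof. by case: Hs => _ _ _ H /H []. Qed.

Lemma star_idem M : Fbar D M -> star (star M) = star M.
Proof. by case: Hs => _ _ _ H /H []. Qed.

Lemma star0 M : Fbar D M -> star M 0.
Proof. by move/Fbar_star => [[]]. Qed.

Lemma Fbar_scale a M : a != 0 -> Fbar D M -> Fbar D (scale a M).
Proof.
move=> a0 [[M0 Madd Mmul] [m [Mm m0]]]; split.
  split.
  - by exists 0; rewrite mulr0.
  - by move=> x y [e [Me ->]] [f [Mf ->]]; exists (e + f); rewrite mulrDr; split => //; apply: Madd.
  - by move=> d x Dd [e [Me ->]]; exists (d * e); rewrite mulrCA; split => //; apply: Mmul.
by exists (a * m); split; [exists m|exact: mulf_neq0].
Qed.

Lemma L2 a M N : Fbar D M -> Fbar D N -> (forall m, M m -> N (a * m)) ->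
  forall m, star M m -> star N (a * m).
Proof.
move=> FM FN Hsub m sm; have [->|a0] := eqVneq a 0.
  by rewrite mul0r; apply: star0.
have : scale a (star M) (a * m) by exists m.
case: Hs => _ Sscale Smono _.
rewrite -Sscale //; apply: Smono => //; first exact: Fbar_scale.
by move=> y [e [Me ->]]; apply: Hsub.
Qed.

Lemma L1 x M : Fbar D M -> (forall m, M m -> star M (x * m)) ->
  forall m, star M m -> star M (x * m).
Proof.
move=> FM H m sm; rewrite -(star_idem FM); exact: (L2 FM (Fbar_star FM) H sm).
Qed.

Lemma L3 F M w : star F = star D -> Fbar D F -> Fbar D M ->
  (forall f, F f -> star M (w * f)) -> star M w.
Proof.
move=> HF FF FM H; have [->|w0] := eqVneq w 0; first exact: star0.
have FS : F `<=` scale w^-1 (star M).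
  move=> f Ff; exists (w * f); split; first exact: H.
  by rewrite mulrA mulVf // mul1r.
have : star D 1 by apply: sub_star; [exact: FbarD|case: HDr].
case: Hs => _ Sscale Smono _.
rewrite -HF => /(Smono _ _ FF (Fbar_scale (invr_neq0 w0) (Fbar_star FM)) FS).
rewrite Sscale ?invr_neq0 //; last exact: Fbar_star.
rewrite star_idem //.
case=> e [se e1]; suff -> : w = e by [].
by rewrite -[w]mulr1 e1 mulrA mulfV // mul1r.
Qed.

Lemma Fbar_mod M : Fbar D M -> is_Dmodule D M.
Proof. by case. Qed.

Lemma comb_brk H1 H2 : fD D H1 -> fD D H2 -> exists H, fD D H /\
   (forall x, colon (star H1) (star H1) x -> colon (star H) (star H) x) /\
   (forall x, colon (star H2) (star H2) x -> colon (star H) (star H) x).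
Proof.
move=> [FH1 [s1 E1]] [FH2 [s2 E2]].
set L := [seq a * b | a <- s1, b <- s2].
have [D0 D1 Dadd Dmul] := HDr.
have ML := span_mod L HDr.
have [ML0 MLadd MLmul] := ML.
have prod_in1 : forall a, a \in s1 -> forall h2, dspan D s2 h2 -> dspan D L (a * h2).
  move=> a ai; apply: span_sub => //.
    split; first by rewrite mulr0.
      by move=> x y ? ?; rewrite mulrDr; apply: MLadd.
    by move=> d x Dd ?; rewrite mulrCA; apply: MLmul.
  by move=> b bi; apply: (span_mem HDr); apply: (allpairs_f (fun x y : K => x * y)).
have prod_in : forall h1 h2, H1 h1 -> H2 h2 -> dspan D L (h1 * h2).
  move=> h1 h2; rewrite E1 E2 => S1; move: h2; apply: (span_sub (P := fun x => forall h2, dspan D s2 h2 -> dspan D L (x * h2)) HDr _ _ S1).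
    split; first by move=> h2 _; rewrite mul0r.
      by move=> x y Hx Hy h2 S2; rewrite mulrDl; apply: MLadd; [apply: Hx|apply: Hy].
    by move=> d x Dd Hx h2 S2; rewrite -mulrA; apply: MLmul => //; apply: Hx.
  move=> a ai h2; exact: prod_in1.
have [h1 [Hh1 h10]] := FH1.2.
have [h2 [Hh2 h20]] := FH2.2.
have FH : Fbar D (dspan D L).
  by split => //; exists (h1 * h2); split; [apply: prod_in|exact: mulf_neq0].
exists (dspan D L); split; first by split => //; exists L.
have Hstar := Fbar_mod (Fbar_star FH).
have [S0 Sadd Smul] := Hstar.
split => x cx; apply: L1 => //.
- apply: span_sub => //.
    split; first by rewrite mulr0.
      by move=> u v ? ?; rewrite mulrDr; apply: Sadd.
    by move=> d u Dd ?; rewrite mulrCA; apply: Smul.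
  move=> c /allpairsP [[a b] /= [ai bi ->]].
  rewrite mulrA mulrC; apply: (L2 FH1 FH) => //.
    by move=> m Hm; rewrite mulrC; apply: prod_in => //; rewrite E2; apply: span_mem.
  apply: cx; apply: sub_star => //; rewrite E1; exact: span_mem.
- apply: span_sub => //.
    split; first by rewrite mulr0.
      by move=> u v ? ?; rewrite mulrDr; apply: Sadd.
    by move=> d u Dd ?; rewrite mulrCA; apply: Smul.
  move=> c /allpairsP [[a b] /= [ai bi ->]].
  rewrite [a * b]mulrC mulrA mulrC; apply: (L2 FH2 FH) => //.
    by move=> m Hm; apply: prod_in => //; rewrite E1; apply: span_mem.
  apply: cx; apply: sub_star => //; rewrite E2; exact: span_mem.
Qed.

Lemma DsubBrk : D `<=` Dbracket D star.
Proof.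
move=> d Dd; exists D; split; first exact: fDD.
apply: L1; first exact: FbarD.
have [D0 D1 Dadd Dmul] := HDr.
by move=> m Dm; apply: sub_star; [exact: FbarD|apply: Dmul].
Qed.

Lemma brk_ring : ringlike (Dbracket D star).
Proof.
have [D0 D1 Dadd Dmul] := HDr.
split; [exact: DsubBrk|exact: DsubBrk| |].
- move=> x y [H1 [f1 c1]] [H2 [f2 c2]].
  have [H [fH [T1 T2]]] := comb_brk f1 f2.
  exists H; split => // f sf; rewrite mulrDl.
  by have [[_ Hadd _] _] := Fbar_star fH.1; apply: Hadd; [apply: T1|apply: T2].
- move=> x y [H1 [f1 c1]] [H2 [f2 c2]].
  have [H [fH [T1 T2]]] := comb_brk f1 f2.
  by exists H; split => // f sf; rewrite -mulrA; apply: T1 => //; apply: T2.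
Qed.

Lemma brk_common z (l : seq K) : (forall a, a \in l -> Dbracket D star (z * a)) ->
  exists H, fD D H /\ forall a, a \in l -> colon (star H) (star H) (z * a).
Proof.
elim: l => [|b l IH] Hl; first by exists D; split => //; exact: fDD.
have [H1 [f1 c1]] := Hl b (mem_head _ _).
have [H2 [f2 c2]] := IH (fun a ai => Hl a (mem_behead (s := b :: l) ai)).
have [H [fH [T1 T2]]] := comb_brk f1 f2.
exists H; split => // a; rewrite inE; case/orP => [/eqP ->|ai]; first exact: T1.
by apply: T2; apply: c2.
Qed.

Lemma brk_key (s : seq K) z : star (dspan D s) = star D -> Fbar D (dspan D s) ->
  (forall a, a \in s -> Dbracket D star (z * a)) -> Dbracket D star z.
Proof.
move=> HF FF Hz; have [H [fH cH]] := brk_common Hz.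
exists H; split => // e se.
have [[S0 Sadd Smul] _] := Fbar_star fH.1.
apply: (L3 HF FF fH.1).
apply: span_sub => //.
  split; first by rewrite mulr0.
    by move=> u v ? ?; rewrite mulrDr; apply: Sadd.
  by move=> d u Dd ?; rewrite mulrCA; apply: Smul.
by move=> a ai; rewrite -mulrA (mulrC e) mulrA; apply: cH.
Qed.

End Star.


Section Cic.
Variable K : fieldType.
Variables (D : set K).
Hypotheses (HD : is_subring D).
Implicit Types (E F M N : set K).

Let HDr := subring_ringlike HD.

Lemma comb_cic E1 E2 : frac_ideal D E1 -> nonzero_set E1 -> frac_ideal D E2 -> nonzero_set E2 ->
  exists E, [/\ frac_ideal D E, nonzero_set E,
   (forall x, colon E1 E1 x -> colon E E x) &
   (forall x, colon E2 E2 x -> colon E E x)].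
Proof.
move=> [[_ _ M1] [d1 [Dd1 d10 S1]]] [e1 [E1e e10]] [[_ _ M2] [d2 [Dd2 d20 S2]]] [e2 [E2e e20]].
have [D0 D1 Dadd Dmul] := HDr.
exists (prodset E1 E2); split.
- split.
    split; [exact: prodset0|exact: prodset_add|].
    move=> d x Dd Px; apply: (prodset_map (h := fun p => (d * p.1, p.2))) Px.
      by move=> p /= ? ?; split => //; apply: M1.
    by move=> p /=; rewrite mulrA.
  exists (d1 * d2); split; [exact: Dmul|exact: mulf_neq0|].
  move=> y [x [Px ->]].
  have : prodset D D (d1 * d2 * x).
    apply: (prodset_map (h := fun p => (d1 * p.1, d2 * p.2))) Px.
      by move=> p /= ? ?; split; [apply: S1; exists p.1|apply: S2; exists p.2].
    by move=> p /=; rewrite mulrACA.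
  by apply: prodset_in.
- by exists (e1 * e2); split; [apply: prodset_mem|exact: mulf_neq0].
- move=> x cx y Py; apply: (prodset_map (h := fun p => (x * p.1, p.2))) Py.
    by move=> p /= ? ?; split => //; apply: cx.
  by move=> p /=; rewrite mulrA.
- move=> x cx y Py; apply: (prodset_map (h := fun p => (p.1, x * p.2))) Py.
    by move=> p /= ? ?; split => //; apply: cx.
  by move=> p /=; rewrite mulrCA.
Qed.

Lemma frac_mod E : frac_ideal D E -> is_Dmodule D E.
Proof. by case. Qed.

Lemma DsubCic : D `<=` cic D.
Proof.
have [D0 D1 Dadd Dmul] := HDr.
move=> d Dd; exists D; split.
- split; first by split.
  by exists 1; split => //; [exact: oner_neq0|move=> y [e [De ->]]; rewrite mul1r].
- by exists 1; split => //; exact: oner_neq0.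
- by move=> f Df; apply: Dmul.
Qed.

Lemma cic_ring : ringlike (cic D).
Proof.
have [D0 D1 _ _] := HDr.
split; [exact: DsubCic|exact: DsubCic| |].
- move=> x y [E1 [f1 n1 c1]] [E2 [f2 n2 c2]].
  have [E [fE nE T1 T2]] := comb_cic f1 n1 f2 n2.
  exists E; split => // f sf; rewrite mulrDl.
  by have [_ Hadd _] := frac_mod fE; apply: Hadd; [apply: T1|apply: T2].
- move=> x y [E1 [f1 n1 c1]] [E2 [f2 n2 c2]].
  have [E [fE nE T1 T2]] := comb_cic f1 n1 f2 n2.
  by exists E; split => // f sf; rewrite -mulrA; apply: T1 => //; apply: T2.
Qed.

Lemma cic_common z (l : seq K) : (forall a, a \in l -> cic D (z * a)) ->
  exists E, [/\ frac_ideal D E, nonzero_set E &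
     forall a, a \in l -> colon E E (z * a)].
Proof.
have [D0 D1 Dadd Dmul] := HDr.
elim: l => [|b l IH] Hl.
  exists D; split => //.
    split; first by split.
    by exists 1; split => //; [exact: oner_neq0|move=> y [e [De ->]]; rewrite mul1r].
  by exists 1; split => //; exact: oner_neq0.
have [E1 [f1 n1 c1]] := Hl b (mem_head _ _).
have [E2 [f2 n2 c2]] := IH (fun a ai => Hl a (mem_behead (s := b :: l) ai)).
have [E [fE nE T1 T2]] := comb_cic f1 n1 f2 n2.
exists E; split => // a; rewrite inE; case/orP => [/eqP ->|ai]; first exact: T1.
by apply: T2; apply: c2.
Qed.

End Cic.


Lemma cic_key2 (K : fieldType) (D : set K) star (s : seq K) z :
  is_subring D -> semistar D star -> nonzero_set (colon D (star D)) ->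
  star (dspan D s) = star D -> Fbar D (dspan D s) ->
  (forall a, a \in s -> cic D (z * a)) -> cic D z.
Proof.
move=> HD Hs [c [cc c0]] HF FF Hz.
have HDr := subring_ringlike HD; have [D0 D1 Dadd Dmul] := HDr.
have [E [fE nE cE]] := cic_common HD Hz.
have FE : Fbar D E by split => //; case: fE.
have [[S0 Sadd Smul] nS] := Fbar_star Hs FE.
have Dc : D c by rewrite -[c]mulr1; apply: cc; apply: (sub_star Hs (FbarD HD)).
have [d [Dd d0 dE]] := fE.2.
exists (star E); split => //.
- split; first by split.
  exists (c * d); split; [exact: Dmul|exact: mulf_neq0|].
  move=> y [e [se ->]]; rewrite -mulrA; apply: cc.
  apply: (L2 Hs FE (FbarD HD)) => // m Em; apply: dE; by exists m.
- move=> e se; apply: (L3 HD Hs HF FF FE).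
  apply: span_sub => //.
    split; first by rewrite mulr0.
      by move=> u v ? ?; rewrite mulrDr; apply: Sadd.
    by move=> d' u Dd' ?; rewrite mulrCA; apply: Smul.
  move=> a ai; rewrite -mulrA (mulrC e) mulrA; apply: (L1 Hs FE) => //.
  by move=> m Em; apply: (sub_star Hs FE); apply: cE.
Qed.

Lemma cic_key3 (K : fieldType) (D : set K) (s : seq K) z :
  is_subring D -> top D (dspan D s) = top D D ->
  (forall a, a \in s -> cic D (z * a)) -> cic D z.
Proof.
move=> HD HF Hz.
have HDr := subring_ringlike HD; have [D0 D1 Dadd Dmul] := HDr.
have colF : colon D (dspan D s) `<=` D.
  have : top D D 1.
    exists D; split => //; first exact: fDD.
    by move=> y cy; rewrite mul1r -[y]mulr1; apply: cy.
  rewrite -HF => -[G [fG GF vG]] u cu.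
  rewrite -[u]mul1r; apply: vG => g Gg; apply: cu; exact: GF.
have [E [fE nE cE]] := cic_common HD Hz.
have [d [Dd d0 dE]] := fE.2.
have [E0 Eadd Emul] := fE.1.
exists (colon D (colon D E)); split.
- split.
    split.
    + by move=> j _; rewrite mul0r.
    + by move=> x y cx cy j cj; rewrite mulrDl; apply: Dadd; [apply: cx|apply: cy].
    + by move=> d' x Dd' cx j cj; rewrite -mulrA; apply: Dmul => //; apply: cx.
  exists d; split => // y [v [cv ->]]; rewrite mulrC; apply: cv.
  by move=> e Ee; apply: dE; exists e.
- by have [e [Ee e0]] := nE; exists e; split => // j cj; rewrite mulrC; apply: cj.
- move=> v cv j cj.
  have key : forall a, a \in s -> colon D E (z * a * j).
    move=> a ai e Ee; rewrite (mulrC _ j) -mulrA; apply: cj; exact: cE.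
  have : colon D (dspan D s) (v * z * j).
    apply: span_sub => //.
      split; first by rewrite mulr0.
        by move=> u w ? ?; rewrite mulrDr; apply: Dadd.
      by move=> d' u Dd' ?; rewrite mulrCA; apply: Dmul.
    move=> a ai; have -> : v * z * j * a = v * (z * a * j) by ring.
    by apply: cv; exact: key.
  by move/colF; rewrite (mulrC z).
Qed.

Unset Implicit Arguments.
Set Strict Implicit.


Theorem corollary3p6 (K : fieldType) (D : set K) (star : set K -> set K) :
  domain_with_qf D -> semistar D star ->
  [/\ t_linked_star D star (Dbracket D star),
      (nonzero_set (colon D (star D)) -> t_linked_star D star (cic D)) &
      t_linked D (cic D)].
Proof.
move=> [HD _] Hs; split.
- move=> F [FbF [s Fs]] FD HF; subst F.
  apply: (generic_link HD (brk_ring HD Hs) (DsubBrk HD Hs) FD FbF.2).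
  by move=> z Hz; exact: (brk_key HD Hs HF FbF Hz).
- move=> nz F [FbF [s Fs]] FD HF; subst F.
  apply: (generic_link HD (cic_ring HD) (DsubCic HD) FD FbF.2).
  by move=> z Hz; exact: (cic_key2 HD Hs nz HF FbF Hz).
- move=> F [FbF [s Fs]] FD HF; subst F.
  apply: (generic_link HD (cic_ring HD) (DsubCic HD) FD FbF.2).
  by move=> z Hz; exact: (cic_key3 HD HF Hz).
Qed.
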